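(* Let $N, J \ge 1$ be integers and let $F_1,\dots,F_J:\mathbb{R}_+^N\to\mathbb{R}_+$ be upper semicontinuous functions that are homogeneous of degree 1 (i.e. $F_j(\lambda x)=\lambda F_j(x)$ for all $\lambda\ge 0$, $x\in\mathbb{R}_+^N$). Define $F:\mathbb{R}_+^N\to\mathbb{R}_+$ by $$F(x)=\max\Big\{\sum_{j=1}^J F_j(x_j): x_j\in\mathbb{R}_+^N \text{ for all } j,\ \sum_{j=1}^J x_j=x\Big\}.$$ Let $w\in\mathbb{R}^N$ and suppose $x^*\in\arg\max_{x\ge 0}\,(F(x)-w\cdot x)$. Let $x_1^*,\dots,x_J^*\in\mathbb{R}_+^N$ be any vectors with $x^*=\sum_{j=1}^J x_j^*$ and $x_j^*\in\arg\max_{x\ge 0}\,(F_j(x)-w\cdot x)$ for every $j$. Let $C$ be the smallest convex cone containing $\{x_1^*,\dots,x_J^*\}$. Then $F(x)=w\cdot x$ for all $x\in C$.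
   Context: A production function is an upper semicontinuous function $\mathbb{R}_+^N\to\mathbb{R}_+$. The function $F$ defined in the claim (the maximum is attained) is called the aggregate production function of $F_1,\dots,F_J$. A set $C$ is a cone if $y\in C$, $\alpha\ge0$ imply $\alpha y\in C$; the smallest convex cone containing a finite set $\{y_j\}$ is $\{\sum_j\alpha_j y_j:\alpha_j\ge 0\}$. $x\ge 0$ means $x\in\mathbb{R}_+^N$. *)

(* Defs.v *)
From HB Require Import structures.
From mathcomp Require Import all_boot all_order all_algebra.
From mathcomp Require Import reals.
Set Implicit Arguments. Unset Strict Implicit. Unset Printing Implicit Defensive.
Import Order.TTheory GRing.Theory Num.Theory.
Local Open Scope ring_scope.

Section Defs.
Variables (R : realType) (N : nat).

Definition nonneg (x : 'rV[R]_N) : Prop := forall i, 0 <= x ord0 i.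

Definition dotp (w x : 'rV[R]_N) : R := \sum_(i < N) w ord0 i * x ord0 i.

(* f : R_+^N -> R_+ (values outside the orthant are irrelevant) *)
Definition maps_to_nonneg (f : 'rV[R]_N -> R) : Prop :=
  forall x, nonneg x -> 0 <= f x.

Definition usc_on_orthant (f : 'rV[R]_N -> R) : Prop :=
  forall x, nonneg x -> forall t, f x < t ->
    exists2 d, 0 < d & forall y, nonneg y ->
      (forall i, `|y ord0 i - x ord0 i| < d) -> f y < t.

Definition homog1 (f : 'rV[R]_N -> R) : Prop :=
  forall (l : R) x, 0 <= l -> nonneg x -> f (l *: x) = l * f x.

Definition argmax_profit (f : 'rV[R]_N -> R) (w xs : 'rV[R]_N) : Prop :=
  nonneg xs /\ forall x, nonneg x -> f x - dotp w x <= f xs - dotp w xs.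

Definition is_aggregate (J : nat) (Fs : 'I_J -> 'rV[R]_N -> R)
    (F : 'rV[R]_N -> R) : Prop :=
  forall x, nonneg x ->
    (exists xs : 'I_J -> 'rV[R]_N,
        [/\ forall j, nonneg (xs j), \sum_(j < J) xs j = x
          & F x = \sum_(j < J) Fs j (xs j)]) /\
    (forall xs : 'I_J -> 'rV[R]_N,
        (forall j, nonneg (xs j)) -> \sum_(j < J) xs j = x ->
        \sum_(j < J) Fs j (xs j) <= F x).

Definition cone_gen (J : nat) (ys : 'I_J -> 'rV[R]_N) (x : 'rV[R]_N) : Prop :=
  exists a : 'I_J -> R, (forall j, 0 <= a j) /\ x = \sum_(j < J) a j *: ys j.

End Defs.

(* Main.v *)
Require Import Defs.
From HB Require Import structures.
From mathcomp Require Import all_boot all_order all_algebra.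
From mathcomp Require Import reals lra.
Import Order.TTheory GRing.Theory Num.Theory.
Local Open Scope ring_scope.

Section H.
Variables (R : realType) (N : nat).

Lemma dotpD (w x y : 'rV[R]_N) : dotp w (x + y) = dotp w x + dotp w y.
Proof. rewrite /dotp -big_split /=; apply: eq_bigr => i _; by rewrite mxE mulrDr. Qed.

Lemma dotp0 (w : 'rV[R]_N) : dotp w 0 = 0.
Proof. rewrite /dotp big1 // => i _; by rewrite mxE mulr0. Qed.

Lemma dotpZ (w x : 'rV[R]_N) a : dotp w (a *: x) = a * dotp w x.
Proof. rewrite /dotp mulr_sumr; apply: eq_bigr => i _; by rewrite mxE mulrCA. Qed.

Lemma dotp_sum (J : nat) (w : 'rV[R]_N) (f : 'I_J -> 'rV[R]_N) :
  dotp w (\sum_(j < J) f j) = \sum_(j < J) dotp w (f j).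
Proof. exact: (big_morph _ (dotpD w) (dotp0 w)). Qed.

Lemma nonneg_sum (J : nat) (f : 'I_J -> 'rV[R]_N) :
  (forall j, nonneg (f j)) -> nonneg (\sum_(j < J) f j).
Proof.
move=> H; apply: (big_ind (fun x : 'rV[R]_N => nonneg x)) => //.
- by move=> i; rewrite mxE.
- by move=> x y hx hy i; rewrite mxE addr_ge0.
Qed.

Lemma nonnegZ a (x : 'rV[R]_N) : 0 <= a -> nonneg x -> nonneg (a *: x).
Proof. by move=> ha hx i; rewrite mxE mulr_ge0. Qed.

Lemma nonneg0 : nonneg (0 : 'rV[R]_N).
Proof. by move=> i; rewrite mxE. Qed.

Lemma key (f : 'rV[R]_N -> R) w xj : homog1 f -> argmax_profit f w xj ->
  (forall x, nonneg x -> f x <= dotp w x) /\ f xj = dotp w xj.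
Proof.
move=> hh [hn hm].
have h0 : f 0 = 0.
  by have := hh 0 0 (lexx _) nonneg0; rewrite scale0r mul0r.
have ge : 0 <= f xj - dotp w xj.
  by have := hm 0 nonneg0; rewrite h0 dotp0 subr0.
have le : f xj - dotp w xj <= 0.
  have := hm (2 *: xj) (@nonnegZ 2 xj (ler0n R 2) hn).
  rewrite hh ?ler0n // dotpZ => H; lra.
split; last by lra.
by move=> x hx; have := hm x hx; lra.
Qed.

End H.

Theorem theorem1 (R : realType) (N J : nat) (hN : (0 < N)%N) (hJ : (0 < J)%N)
  (Fs : 'I_J -> 'rV[R]_N -> R)
  (hFs_nonneg : forall j, maps_to_nonneg (Fs j))
  (hFs_usc : forall j, usc_on_orthant (Fs j))
  (hFs_homog : forall j, homog1 (Fs j))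
  (F : 'rV[R]_N -> R) (hF : is_aggregate Fs F)
  (w xstar : 'rV[R]_N) (hxstar : argmax_profit F w xstar)
  (xs : 'I_J -> 'rV[R]_N)
  (hxs_nonneg : forall j, nonneg (xs j))
  (hxs_sum : xstar = \sum_(j < J) xs j)
  (hxs_opt : forall j, argmax_profit (Fs j) w (xs j)) :
  forall x, cone_gen xs x -> F x = dotp w x.
Proof.
move=> x [a [ha ->]].
have hnn : nonneg (\sum_(j < J) a j *: xs j).
  by apply: nonneg_sum => j; apply: nonnegZ.
have [[ys [hys hsum ->]] hup] := hF _ hnn.
apply/eqP; rewrite eq_le; apply/andP; split.
- rewrite -hsum dotp_sum; apply: ler_sum => j _.
  by have [+ _] := @key _ _ _ _ _ (hFs_homog j) (hxs_opt j); apply.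
- have := hup (fun j => a j *: xs j) (fun j => @nonnegZ _ _ _ _ (ha j) (hxs_nonneg j)) erefl.
  apply: le_trans; rewrite dotp_sum le_eqVlt; apply/orP; left; apply/eqP.
  apply: eq_bigr => j _; rewrite dotpZ (hFs_homog j) //.
  by have [_ ->] := @key _ _ _ _ _ (hFs_homog j) (hxs_opt j).
Qed.
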